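(* Let $q$ be a prime power and $n,t,m$ positive integers with $t\geq m$. Let $\ell$ be a positive integer such that $$ e \left[ {\ell \choose t} - { \ell-t \choose t} \right] \left(\frac{m}{q}\right)^{n} \leq 1,$$ where $e$ is Euler's number and ${\ell-t \choose t}$ is set to zero if $\ell < 2t$. Then $EGZ(t,\mathbb{F}_q^{n},m) > \ell$.
   Context: $\mathbb{F}_q^n$ is viewed as a commutative ring with coordinatewise operations. For elements $g_1,\dots,g_t$ of a commutative ring $R$, $e_m(g_1,\dots,g_t)=\sum_{1\leq i_1<\cdots<i_m\leq t}\prod_{j=1}^m g_{i_j}$. A sequence over $R$ is a finite list of elements of $R$ (repetitions allowed); a subsequence of length $t$ is obtained by choosing $t$ distinct positions. For a finite commutative ring $R$, $EGZ(t,R,m)$ is the smallest positive integer $\ell$ such that every sequence $S$ over $R$ of length $|S|\geq \ell$ contains a subsequence $S'$ of length $t$ with $e_m(S')=0$ in $R$; if no such $\ell$ exists, $EGZ(t,R,m)=\infty$. *)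

(* Defs.v *)
From HB Require Import structures.
From mathcomp Require Import all_boot all_order all_algebra.
Set Implicit Arguments. Unset Strict Implicit. Unset Printing Implicit Defensive.
Import GRing.Theory.
Local Open Scope ring_scope.

(* F_q^n as a commutative ring with coordinatewise operations:
   finite functions 'I_n -> F with the pointwise ring structure of ssralg. *)
Definition Fqn (F : finFieldType) (n : nat) := {ffun 'I_n -> F}.

Definition esym_at (R : pzSemiRingType) (m : nat) (S : seq R)
    (I : {set 'I_(size S)}) : R :=
  \sum_(J : {set 'I_(size S)} | (J \subset I) && (#|J| == m))
     \prod_(j in J) nth 0 S j.

Definition EGZ_holds (R : pzSemiRingType) (t m l : nat) : Prop :=
  forall S : seq R, (l <= size S)%N ->
    exists I : {set 'I_(size S)}, #|I| = t /\ esym_at m I = 0.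

(* EGZ(t,R,m) > l  :<=>  no positive l' <= l has the EGZ property
   (this also covers EGZ(t,R,m) = infinity). *)
Definition EGZ_gt (R : pzSemiRingType) (t m l : nat) : Prop :=
  forall l', (0 < l')%N -> (l' <= l)%N -> ~ EGZ_holds R t m l'.

(* Main.v *)
Require Import Defs.
From mathcomp Require Import all_boot all_order all_algebra.
From mathcomp Require Import zify.
Set Implicit Arguments. Unset Strict Implicit. Unset Printing Implicit Defensive.
Import GRing.Theory.

Section Part1.
Local Open Scope ring_scope.
Variables (F : finFieldType) (n L : nat).
Local Notation X := {ffun 'I_n -> F}.
Local Notation Om := {ffun 'I_L -> X}.

Lemma prod_ffunE (J : {set 'I_L}) (w : Om) k :
  (\prod_(j in J) w j) k = \prod_(j in J) w j k.
Proof.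
by elim/big_rec2: _ => [|j a b _ <-]; rewrite !ffunE.
Qed.

Definition ek (m : nat) (T : {set 'I_L}) (w : Om) (k : 'I_n) : F :=
  \sum_(J : {set 'I_L} | (J \subset T) && (#|J| == m)) \prod_(j in J) w j k.

Definition esymF (m : nat) (w : Om) (T : {set 'I_L}) : X :=
  \sum_(J : {set 'I_L} | (J \subset T) && (#|J| == m)) \prod_(j in J) w j.

Lemma esymFE m w T k : esymF m w T k = ek m T w k.
Proof.
rewrite /esymF sum_ffunE; apply: eq_bigr => J _; exact: prod_ffunE.
Qed.

Lemma ek0 T w k : ek 0 T w k = 1.
Proof.
rewrite /ek (big_pred1 set0) ?big_set0 // => J /=.
by rewrite cards_eq0 andb_idl // => /eqP ->; rewrite sub0set.
Qed.

Lemma ek_dep m (T : {set 'I_L}) (w w' : Om) k : (forall j, j \in T -> w j k = w' j k) ->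
  ek m T w k = ek m T w' k.
Proof.
move=> H; apply: eq_bigr => J /andP [/subsetP JT _].
by apply: eq_bigr => j /JT /H.
Qed.

Lemma ekS m (T : {set 'I_L}) (w : Om) k j0 : j0 \in T ->
  ek m.+1 T w k = w j0 k * ek m (T :\ j0) w k + ek m.+1 (T :\ j0) w k.
Proof.
move=> j0T; rewrite /ek (bigID (fun J : {set 'I_L} => j0 \in J)) /=; congr (_ + _); last first.
  by apply: eq_bigl => J; rewrite subsetD1 -andbA [X in _ && X]andbC andbA.
rewrite mulr_sumr.
rewrite (reindex_onto (fun J => j0 |: J) (fun J => J :\ j0)) /=; last first.
  by move=> J /andP [_ j0J]; rewrite setD1K.
apply: eq_big => J.
  case j0J: (j0 \in J).
    have -> : j0 |: J = J by apply/setUidPr; rewrite sub1set.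
    rewrite subsetD1 j0J /= andbF; apply/negbTE; rewrite negb_and; apply/orP; right.
    apply/negP => /eqP E; by move: j0J; rewrite -E !inE eqxx.
  rewrite setU1K ?j0J // eqxx setU11 !andbT subUset sub1set j0T /= cardsU1 j0J.
  by rewrite add1n eqSS subsetD1 j0J andbT.
move=> /andP [_ /eqP E].
have j0J : j0 \notin J by rewrite -E !inE eqxx.
by rewrite big_setU1.
Qed.

End Part1.


Section Part2.
Variables (F : finFieldType) (n L : nat).
Local Notation X := {ffun 'I_n -> F}.
Local Notation Om := {ffun 'I_L -> X}.
Implicit Types (P : {set 'I_L}) (K : {set 'I_n}) (C D A : {set Om}) (w : Om).

Definition agree (P : {set 'I_L}) (K : {set 'I_n}) (w w' : Om) :=
  forall j k, ~~ ((j \in P) && (k \in K)) -> w j k = w' j k.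

Definition clsd (P : {set 'I_L}) (K : {set 'I_n}) (C : {set Om}) :=
  forall w w', agree P K w w' -> w \in C -> w' \in C.

Lemma agree_sym P K w (w' : Om) : agree P K w w' -> agree P K w' w.
Proof. by move=> H j k /H ->. Qed.

Lemma closed_sub P K (P' : {set 'I_L}) (K' : {set 'I_n}) C : P' \subset P -> K' \subset K ->
  clsd P K C -> clsd P' K' C.
Proof.
move=> /subsetP sP /subsetP sK cC w w' H; apply: cC => j k Hjk; apply: H.
apply: contra Hjk => /andP [/sP -> /sK ->]; done.
Qed.

Lemma closedI P K C D : clsd P K C -> clsd P K D -> clsd P K (C :&: D).
Proof.
move=> cC cD w w' H; rewrite !inE => /andP [wC wD].
by rewrite (cC _ _ H wC) (cD _ _ H wD).
Qed.

Definition upd (j0 : 'I_L) (k0 : 'I_n) (w : Om) (y : F) : Om :=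
  [ffun j => if j == j0 then [ffun k => if k == k0 then y else w j k] else w j].

Lemma agree_upd j0 k0 w y : agree [set j0] [set k0] w (upd j0 k0 w y).
Proof.
move=> j k; rewrite !inE ffunE; case: eqP => // -> /=; rewrite ffunE.
by case: eqP.
Qed.

Lemma fiber_lemma (j0 : 'I_L) (k0 : 'I_n) (C A : {set Om}) :
  clsd [set j0] [set k0] C ->
  (forall w w', agree [set j0] [set k0] w w' -> w \in A -> w' \in A -> w = w') ->
  #|C :&: A| * #|F| <= #|C|.
Proof.
move=> cC uA.
pose f := fun p : Om * F => upd j0 k0 p.1 p.2.
have -> : #|C :&: A| * #|F| = #|f @: setX (C :&: A) [set: F]|.
  rewrite card_in_imset ?cardsX ?cardsT //.
  move=> [w y] [w' y'] /=; rewrite !inE /= !andbT => /andP [_ wA] /andP [_ w'A].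
  rewrite /f /= => E.
  have Ey : y = y'.
    move: (congr1 (fun u : Om => u j0 k0) E) => /=.
    by rewrite !ffunE !eqxx !ffunE !eqxx.
  subst y'; congr (_, _); apply: uA wA w'A => j k Hjk.
  have H1 : w j k = upd j0 k0 w y j k by apply: agree_upd.
  have H2 : w' j k = upd j0 k0 w' y j k by apply: agree_upd.
  by rewrite H1 H2 E.
apply: subset_leq_card; apply/subsetP => x /imsetP [[w y]].
rewrite !inE /= => /andP [/andP [wC _] _] ->.
exact: (cC w (upd j0 k0 w y) (@agree_upd j0 k0 w y) wC).
Qed.

End Part2.


Section Part3.
Variables (F : finFieldType) (n L : nat).
Local Notation X := {ffun 'I_n -> F}.
Local Notation Om := {ffun 'I_L -> X}.
Implicit Types (P : {set 'I_L}) (K : {set 'I_n}) (C D A : {set Om}) (w : Om).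

Lemma SZ1 (k : 'I_n) m : forall (T : {set 'I_L}) C, m <= #|T| -> clsd T [set k] C ->
  #|C :&: [set w | ek m T w k == 0%R]| * #|F| <= m * #|C|.
Proof.
elim: m => [|m IH] T C mT cC.
  have -> : C :&: [set w | ek 0 T w k == 0%R] = set0.
    by apply/setP => w; rewrite !inE ek0 oner_eq0 andbF.
  by rewrite cards0.
have /set0Pn [j0 j0T] : T != set0 by rewrite -card_gt0; apply: leq_trans mT.
have mT' : m <= #|T :\ j0| by move: mT; rewrite (cardsD1 j0 T) j0T.
pose Z := [set w : Om | ek m.+1 T w k == 0%R].
pose Aa := [set w : Om | ek m (T :\ j0) w k == 0%R].
rewrite -/Z -(cardsID Aa (C :&: Z)) -setIDA mulnDl mulSn addnC.
apply: leq_add; last first; last first.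
  apply: (@fiber_lemma _ _ _ j0 k).
    by apply: (closed_sub _ _ cC); [rewrite sub1set | rewrite subxx].
  move=> w w' Hag; rewrite !inE => /andP [wa wZ] /andP [w'a w'Z].
  have Hdep : forall m', ek m' (T :\ j0) w k = ek m' (T :\ j0) w' k.
    move=> m'; apply: ek_dep => j; rewrite !inE => /andP [jj0 _]; apply: Hag.
    by rewrite !inE (negbTE jj0).
  move: wZ w'Z; rewrite (ekS _ _ _ j0T) (ekS _ _ _ j0T) !Hdep => /eqP E1 /eqP E2.
  have Ej : w j0 k = w' j0 k.
    apply: (mulIf w'a); apply: (addIr (ek m.+1 (T :\ j0) w' k)); by rewrite E1 E2.
  apply/ffunP => j; apply/ffunP => k'.
  case: (boolP ((j == j0) && (k' == k))) => [/andP [/eqP -> /eqP ->] // | Hne].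
  by apply: Hag; rewrite !inE.
apply: leq_trans (IH (T :\ j0) C mT' _).
  rewrite leq_mul2r; apply/orP; right; apply: subset_leq_card.
  by apply/subsetP => w; rewrite !inE => /andP [/andP [-> _] ->].
by apply: closed_sub cC; rewrite ?subD1set.
Qed.

Lemma SZK m (T : {set 'I_L}) : m <= #|T| -> forall K C, clsd T K C ->
  #|C :&: [set w : Om | [forall k in K, ek m T w k == 0%R]]| * #|F| ^ #|K|
    <= m ^ #|K| * #|C|.
Proof.
move=> mT K; move: {2}#|K| (erefl #|K|) => c; elim: c K => [|c IH] K Kc C cC.
  move/eqP: Kc; rewrite cards_eq0 => /eqP ->; rewrite cards0 !expn0 muln1 mul1n.
  apply: subset_leq_card; apply/subsetP => w; rewrite !inE; by case/andP.
have /set0Pn [k0 k0K] : K != set0 by rewrite -card_gt0 Kc.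
have Kc' : #|K :\ k0| = c by move: Kc; rewrite (cardsD1 k0 K) k0K add1n => [[]].
pose C' := C :&: [set w : Om | [forall k in K :\ k0, ek m T w k == 0%R]].
have -> : C :&: [set w : Om | [forall k in K, ek m T w k == 0%R]] =
          C' :&: [set w : Om | ek m T w k0 == 0%R].
  apply/setP => w; rewrite !inE -andbA; congr (_ && _).
  apply/idP/idP.
    move/forall_inP => H; apply/andP; split; last exact: H.
    by apply/forall_inP => k; rewrite !inE => /andP [_ /H].
  move=> /andP [/forall_inP H H0]; apply/forall_inP => k kK.
  case: (eqVneq k k0) => [-> //|kk0]; apply: H; by rewrite !inE kk0.
rewrite Kc !expnS mulnA -(mulnA m).
apply: leq_trans (_ : m * #|C'| * #|F| ^ c <= _).
  rewrite leq_mul2r; apply/orP; right; apply: SZ1 => //.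
  apply: closedI.
    by apply: (closed_sub _ _ cC); [rewrite subxx | rewrite sub1set].
  move=> w w' Hag; rewrite !inE => /forall_inP H; apply/forall_inP => k kK.
  suff <- : ek m T w k = ek m T w' k by apply: H.
  apply: ek_dep => j jT; apply: Hag.
  move: kK; rewrite !inE => /andP [kk0 _]; by rewrite (negbTE kk0) andbF.
rewrite -mulnA leq_mul2l; apply/orP; right.
rewrite -Kc'; apply: IH => //.
by apply: (closed_sub _ _ cC); [rewrite subxx | rewrite subD1set].
Qed.

Lemma SZfull m (T : {set 'I_L}) C : m <= #|T| -> clsd T [set: 'I_n] C ->
  #|C :&: [set w : Om | esymF m w T == 0%R]| * #|F| ^ n <= m ^ n * #|C|.
Proof.
move=> mT cC; have := SZK mT cC; rewrite cardsT card_ord.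
suff -> : [set w : Om | esymF m w T == 0%R] =
          [set w : Om | [forall k in [set: 'I_n], ek m T w k == 0%R]] by [].
apply/setP => w; rewrite !inE; apply/eqP/forall_inP.
  by move=> E k _; rewrite -esymFE E ffunE.
by move=> H; apply/ffunP => k; rewrite esymFE ffunE; apply/eqP/H; rewrite inE.
Qed.

End Part3.

Lemma arith X Y Q Mn N2 N d r : X <= Y -> Y * Q <= Mn * N2 -> N2 * d ^ r <= N * d.+1 ^ r ->
  r <= d -> Mn * d.+1 ^ d.+1 <= Q * d ^ d -> 0 < Q -> 0 < d -> X * d.+1 <= N.
Proof.
move=> XY YQ N2N rd cond Q0 d0.
have K0 : 0 < Q * d ^ d by rewrite muln_gt0 Q0 expn_gt0 d0.
rewrite -(leq_pmul2r K0).
have [s Es] : exists s, d = r + s by exists (d - r); rewrite subnKC.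
set D := d ^ d.
have e1 : X * d.+1 * (Q * D) <= (Y * Q) * (d.+1 * D).
  have := leq_mul XY (leqnn (Q * d.+1 * D)); nia.
apply: (leq_trans e1).
have e2 : (Y * Q) * (d.+1 * D) <= Mn * N2 * (d.+1 * D).
  by apply: leq_mul.
apply: (leq_trans e2).
have hD : D = d ^ r * d ^ s by rewrite /D -expnD -Es.
have hS : d.+1 ^ d.+1 = d.+1 * d.+1 ^ r * d.+1 ^ s by rewrite expnS -mulnA -expnD -Es.
have e4 : d ^ s <= d.+1 ^ s by elim: (s) => // s' IH; rewrite !expnS leq_mul.
set A := d ^ r; set B := d ^ s; set A' := d.+1 ^ r; set B' := d.+1 ^ s.
rewrite hD.
have e3 : Mn * N2 * (d.+1 * (A * B)) = Mn * d.+1 * (N2 * A) * B by nia.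
rewrite e3.
apply: leq_trans (_ : Mn * d.+1 * (N * A') * B' <= _).
  by apply: leq_mul => //; apply: leq_mul.
move: cond; rewrite hS => cond.
have e5 : Mn * d.+1 * (N * A') * B' = (Mn * (d.+1 * A' * B')) * N by nia.
rewrite e5 -hD [N * (Q * _)]mulnC leq_mul2r; apply/orP; right; exact: cond.
Qed.

Section Part4.
Variables (F : finFieldType) (n L m t d : nat).
Local Notation X := {ffun 'I_n -> F}.
Local Notation Om := {ffun 'I_L -> X}.
Local Notation SS := {set {set 'I_L}}.

Definition Zs (T : {set 'I_L}) := [set w : Om | esymF m w T == 0%R].
Definition avoid (S : SS) := [set w : Om | [forall T in S, esymF m w T != 0%R]].

Lemma esymF_dep (T : {set 'I_L}) (w w' : Om) : (forall j, j \in T -> w j = w' j) ->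
  esymF m w T = esymF m w' T.
Proof.
move=> H; apply/ffunP => k; rewrite !esymFE; apply: ek_dep => j /H -> //.
Qed.

Lemma avoid_closed (S : SS) (T : {set 'I_L}) : (forall T', T' \in S -> [disjoint T' & T]) ->
  clsd T [set: 'I_n] (avoid S).
Proof.
move=> H w w' Hag; rewrite !inE => /forall_inP H1; apply/forall_inP => T' T'S.
rewrite -(esymF_dep (w := w)); first exact: H1.
move=> j jT'; apply/ffunP => k; apply: Hag.
have := H T' T'S; rewrite disjoint_subset => /subsetP /(_ j jT').
by rewrite !inE => /negbTE ->.
Qed.

Lemma avoid_sub (S S' : SS) : S \subset S' -> avoid S' \subset avoid S.
Proof.
move=> /subsetP sS; apply/subsetP => w; rewrite !inE => /forall_inP H.
by apply/forall_inP => T /sS /H.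
Qed.

Lemma avoid_add (S : SS) (T : {set 'I_L}) : avoid (T |: S) = avoid S :\: Zs T.
Proof.
apply/setP => w; rewrite !inE; apply/forall_inP/andP.
  move=> H; split; first by apply: H; rewrite !inE eqxx.
  by apply/forall_inP => T' T'S; apply: H; rewrite !inE T'S orbT.
move=> [H1 /forall_inP H2] T'; rewrite !inE => /orP [/eqP -> //|]; exact: H2.
Qed.

Lemma stepA (Xs : SS) c : forall U : SS, #|U| = c ->
  (forall (U' : SS) T', U' \subset U -> T' \in U -> T' \notin U' ->
     #|Zs T' :&: avoid (Xs :|: U')| * d.+1 <= #|avoid (Xs :|: U')|) ->
  #|avoid Xs| * d ^ #|U| <= #|avoid (Xs :|: U)| * d.+1 ^ #|U|.
Proof.
elim: c => [|c IH] U Uc H.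
  move/eqP: Uc; rewrite cards_eq0 => /eqP ->; by rewrite setU0 cards0.
have /set0Pn [T' T'U] : U != set0 by rewrite -card_gt0 Uc.
have Uc' : #|U :\ T'| = c by move: Uc; rewrite (cardsD1 T' U) T'U add1n => [[]].
have IH' := IH (U :\ T') Uc'.
have := IH' (fun U'' T'' s1 s2 s3 => H U'' T'' (subset_trans s1 (subD1set _ _))
   (subsetP (subD1set _ _) _ s2) s3).
rewrite Uc Uc' => A1.
have EU : Xs :|: U = T' |: (Xs :|: U :\ T').
  by rewrite setUCA setD1K.
have HY := H (U :\ T') T' (subD1set _ _) T'U (negbT (setD11 _ _)).
move: HY; rewrite EU avoid_add.
set N := #|avoid (Xs :|: U :\ T')|.
have := cardsID (Zs T') (avoid (Xs :|: U :\ T')).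
rewrite -/N setIC.
set Y := #|_ :&: _|; set M := #|_ :\: _| => E HY.
have H2 : N * d <= M * d.+1 by nia.
rewrite !expnS.
apply: leq_trans (_ : N * d.+1 ^ c * d <= _).
  by rewrite [d * _]mulnC mulnA leq_mul2r A1 orbT.
nia.
Qed.

Definition idx := [set T : {set 'I_L} | #|T| == t].

Section Claim.
Hypothesis hdeg : forall T, T \in idx ->
  #|[set T' in idx | (T' != T) && ~~ [disjoint T' & T]]| <= d.
Hypothesis hcond : m ^ n * d.+1 ^ d.+1 <= #|F| ^ n * d ^ d.
Hypothesis hd : 0 < d.
Hypothesis mt : m <= t.

Lemma Fpos : 0 < #|F| ^ n.
Proof. by rewrite expn_gt0; apply/orP; left; apply/card_gt0P; exists 0%R. Qed.

Lemma claim k : forall (S : SS) T, #|S| < k -> S \subset idx -> T \in idx -> T \notin S ->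
  #|Zs T :&: avoid S| * d.+1 <= #|avoid S|.
Proof.
elim: k => // k IH S T Sk Sidx Tidx TS.
pose S1 := [set T' in S | ~~ [disjoint T' & T]].
pose S2 := S :\: S1.
have S1S : S1 \subset S by apply/subsetP => x; rewrite inE => /andP [].
have ES : S2 :|: S1 = S by rewrite /S2 setUC -[in RHS](setID S S1) (setIidPr S1S).
have A : #|avoid S2| * d ^ #|S1| <= #|avoid S| * d.+1 ^ #|S1|.
  rewrite -ES; apply: (stepA (erefl _)) => U' T' U'S1 T'S1 T'U'.
  have T'S : T' \in S := subsetP S1S _ T'S1.
  have sub : S2 :|: U' \subset S :\ T'.
    apply/subsetP => x; rewrite /S2 in_setU in_setD => /orP [/andP [xS1 xS] | xU'].
      rewrite in_setD1 xS andbT; apply/eqP => E; subst x; by rewrite T'S1 in xS1.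
    have xS : x \in S by apply: (subsetP S1S); apply: (subsetP U'S1).
    rewrite in_setD1 xS andbT; apply/eqP => E; subst x; by rewrite xU' in T'U'.
  apply: IH.
  - apply: leq_ltn_trans (subset_leq_card sub) _.
    by move: Sk; rewrite (cardsD1 T' S) T'S add1n ltnS.
  - apply: subset_trans sub _; apply: subset_trans (subD1set _ _) Sidx.
  - exact: (subsetP Sidx).
  - by rewrite /S2 in_setU in_setD T'S1 (negbTE T'U').
have r_le : #|S1| <= d.
  apply: leq_trans (hdeg Tidx); apply: subset_leq_card; apply/subsetP => x.
  rewrite [x \in S1]inE [x \in [set _ in _ | _]]inE => /andP [xS xd].
  rewrite (subsetP Sidx _ xS) xd andbT /=; apply/eqP => E; subst x; by rewrite xS in TS.
have XY : #|Zs T :&: avoid S| <= #|Zs T :&: avoid S2|.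
  by apply: subset_leq_card; apply: setIS; apply: avoid_sub; apply: subsetDl.
have YQ : #|Zs T :&: avoid S2| * #|F| ^ n <= m ^ n * #|avoid S2|.
  rewrite setIC; apply: SZfull.
    by move: Tidx; rewrite inE => /eqP ->.
  apply: avoid_closed => T'; rewrite [T' \in S2]inE => /andP [T'S1 T'S].
  by move: T'S1; rewrite [T' \in S1]inE T'S /= negbK.
exact: (arith XY YQ A r_le hcond Fpos hd).
Qed.

Lemma LLL : exists w : Om, forall T : {set 'I_L}, #|T| = t -> esymF m w T != 0%R.
Proof.
have A : #|avoid set0| * d ^ #|idx| <= #|avoid (set0 :|: idx)| * d.+1 ^ #|idx|.
  apply: (stepA (erefl _)) => U' T' U'idx T'idx T'U'.
  apply: (claim (k := #|idx|.+1)) => //.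
  - by rewrite set0U ltnS subset_leq_card.
  - by rewrite set0U.
  - by rewrite set0U.
have Eav : avoid set0 = [set: Om].
  by apply/setP => w; rewrite !inE; apply/forall_inP => T; rewrite inE.
have pos : 0 < #|[set: Om]| * d ^ #|idx|.
  rewrite muln_gt0 expn_gt0 hd /= andbT cardsT; apply/card_gt0P.
  by exists [ffun => 0%R].
have : 0 < #|avoid idx|.
  rewrite lt0n; apply/eqP => E; move: A; rewrite set0U E mul0n leqn0 Eav.
  by move=> /eqP H0; move: pos; rewrite H0.
case/card_gt0P => w wA; exists w => T Tt; move: wA; rewrite inE => /forall_inP; apply.
by rewrite inE Tt.
Qed.

End Claim.
End Part4.


Lemma bin_mono t L l : 0 < t -> t <= L -> L <= l ->
  'C(L, t) + 'C(l - t, t) <= 'C(l, t) + 'C(L - t, t).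
Proof.
move=> t0 tL Ll; rewrite -(subnKC Ll); elim: (l - L) => [|j IH]; first by rewrite addn0.
case: t t0 tL IH => // t' _ tL IH.
rewrite addnS binS subSn; last by lia.
rewrite binS.
have : 'C(L + j - t'.+1, t') <= 'C(L + j, t') by apply: leq_bin2l; lia.
lia.
Qed.

Section Part6.
Variables (F : finFieldType) (n L m t : nat).
Local Notation X := {ffun 'I_n -> F}.
Local Notation Om := {ffun 'I_L -> X}.

Lemma dep_count l (T : {set 'I_L}) : 0 < t -> t <= L -> L <= l -> T \in idx L t ->
  #|[set T' in idx L t | (T' != T) && ~~ [disjoint T' & T]]| <= ('C(l, t) - 'C(l - t, t)).-1.
Proof.
move=> t0 tL Ll Tidx.
have Tt : #|T| = t by move: Tidx; rewrite inE => /eqP.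
pose A := [set T' in idx L t | ~~ [disjoint T' & T]].
pose B := [set T' in idx L t | [disjoint T' & T]].
have AB : #|A| + #|B| = 'C(L, t).
  have -> : 'C(L, t) = #|idx L t| by rewrite /idx card_draws card_ord.
  rewrite -(cardsID [set T' : {set 'I_L} | [disjoint T' & T]] (idx L t)) addnC.
  congr (_ + _); apply: eq_card => x; rewrite !inE //.
  by rewrite andbC.
have HB : #|B| = 'C(L - t, t).
  have -> : B = [set T' : {set 'I_L} | T' \subset ~: T & #|T'| == t].
    by apply/setP => x; rewrite !inE disjoints_subset andbC.
  by rewrite cards_draws cardsCs card_ord setCK Tt.
have TA : T \in A.
  rewrite inE Tidx /= -setI_eq0 setIid -card_gt0 Tt //.
have -> : [set T' in idx L t | (T' != T) && ~~ [disjoint T' & T]] = A :\ T.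
  by apply/setP => x; rewrite !inE; case: (#|x| == t); case: (x != T).
have := cardsD1 T A; rewrite TA add1n => EA.
have := bin_mono t0 tL Ll.
lia.
Qed.

Lemma d0_case (hdeg : forall T, T \in idx L t ->
    #|[set T' in idx L t | (T' != T) && ~~ [disjoint T' & T]]| <= 0)
  (hmq : m ^ n < #|F| ^ n) (mt : m <= t) :
  exists w : Om, forall T : {set 'I_L}, #|T| = t -> esymF m w T != 0%R.
Proof.
suff : forall c (S : {set {set 'I_L}}), #|S| = c -> S \subset idx L t -> 0 < #|avoid F n m S|.
  move=> /(_ _ (idx L t) (erefl _) (subxx _)) /card_gt0P [w wA].
  exists w => T Tt; move: wA; rewrite inE => /forall_inP; apply.
  by rewrite inE Tt.
elim=> [|c IH] S Sc Sidx.
  move/eqP: Sc; rewrite cards_eq0 => /eqP ->.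
  apply/card_gt0P; exists [ffun => 0%R]; rewrite inE; apply/forall_inP => T.
  by rewrite inE.
have /set0Pn [T TS] : S != set0 by rewrite -card_gt0 Sc.
have Sc' : #|S :\ T| = c by move: Sc; rewrite (cardsD1 T S) TS add1n => [[]].
have Tidx : T \in idx L t := subsetP Sidx _ TS.
have pos := IH _ Sc' (subset_trans (subD1set _ _) Sidx).
have ES : S = T |: (S :\ T) by rewrite setD1K.
rewrite ES avoid_add.
have := cardsID (Zs F n m T) (avoid F n m (S :\ T)); rewrite setIC.
set Y := #|_ :&: _|; set M := #|_ :\: _|; set N := #|avoid F n m (S :\ T)| => E.
have YQ : Y * #|F| ^ n <= m ^ n * N.
  rewrite /Y setIC; apply: SZfull.
    by move: Tidx; rewrite inE => /eqP ->.
  apply: avoid_closed => T' T'S.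
  have := hdeg T Tidx; rewrite leqn0 cards_eq0 => /eqP /setP /(_ T').
  have T'i : T' \in idx L t := subsetP Sidx _ (subsetP (subD1set _ _) _ T'S).
  rewrite !inE; move: T'i; rewrite inE => ->; rewrite /=.
  move: T'S; rewrite in_setD1 => /andP [-> _] /=; by move/negbFE.
have : Y * #|F| ^ n < #|F| ^ n * N.
  apply: leq_ltn_trans YQ _; by rewrite ltn_mul2r pos hmq.
rewrite mulnC ltn_mul2l => /andP [_ YN].
lia.
Qed.

End Part6.


Lemma transport (F : finFieldType) (n t m L : nat) (w : {ffun 'I_L -> Fqn F n})
  (S : seq (Fqn F n)) (e : size S = L) :
  (forall i : 'I_(size S), nth 0%R S i = w (cast_ord e i)) ->
  (forall T : {set 'I_L}, #|T| = t -> esymF m w T != 0%R) ->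
  forall I : {set 'I_(size S)}, #|I| = t -> esym_at m I != 0%R.
Proof.
move=> Hn Hg; move: w Hn Hg; case: L / e => w Hn Hg I HI.
have := Hg I HI; apply: contra => /eqP E; rewrite -E /esymF /esym_at; apply/eqP.
apply: eq_bigr => J _; apply: eq_bigr => j _; by rewrite Hn cast_ord_id.
Qed.

Lemma main_nat (F : finFieldType) (n t m l : nat) :
  0 < t -> m <= t ->
  (1 <= 'C(l, t) - 'C(l - t, t) -> m ^ n < #|F| ^ n) ->
  (forall d, 'C(l, t) - 'C(l - t, t) = d.+1 -> 0 < d ->
     m ^ n * d.+1 ^ d.+1 <= #|F| ^ n * d ^ d) ->
  EGZ_gt (Fqn F n) t m l.
Proof.
move=> t0 mt H1 H2 l' l'0 l'l HE.
have [lt|tl'] := ltnP l' t.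
  have [|I [HI _]] := HE (nseq l' 0%R); first by rewrite size_nseq.
  have := max_card I; rewrite card_ord HI => H; move: H; rewrite size_nseq; lia.
have Dge : 1 <= 'C(l, t) - 'C(l - t, t).
  have := bin_mono t0 (leqnn t) (leq_trans tl' l'l); rewrite subnn bin0n binn.
  case: t t0 {mt H1 H2 HE tl' l'l} => // t _; lia.
have hmq := H1 Dge.
have [w Hw] : exists w : {ffun 'I_l' -> Fqn F n},
    forall T : {set 'I_l'}, #|T| = t -> esymF m w T != 0%R.
  have hdeg := fun T => @dep_count l' t l T t0 tl' l'l.
  move: hdeg H2; case E: ('C(l, t) - 'C(l - t, t)) Dge => [|[|d]] // _ hdeg H2.
    by apply: d0_case.
  apply: (@LLL F n l' m t d.+1) => //; exact: H2.
pose S := [seq w i | i <- enum 'I_l'].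
have e : size S = l' by rewrite size_map size_enum_ord.
have [|I [HI HI0]] := HE S; first by rewrite e.
have Hn : forall i : 'I_(size S), nth 0%R S i = w (cast_ord e i).
  move=> i; rewrite /S (nth_map (cast_ord e i)); last by rewrite size_enum_ord; have := ltn_ord (cast_ord e i).
  congr (w _).
  have -> : (i : nat) = (cast_ord e i : nat) by [].
  by rewrite nth_ord_enum.
have := @transport F n t m l' w S e Hn Hw I HI.
by rewrite HI0 eqxx.
Qed.

From Stdlib Require Import Reals Lra.

Lemma INR_expn a k : INR (expn a k) = (INR a ^ k)%R.
Proof.
elim: k => [|k IH]; first by rewrite expn0.
by rewrite expnS -multE mult_INR IH.
Qed.

Lemma exp_pow_INR x k : (exp x ^ k = exp (INR k * x))%R.
Proof.
elim: k => [|k IH]; first by rewrite /= Rmult_0_l exp_0.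
rewrite [LHS]/= IH -exp_plus S_INR; f_equal; ring.
Qed.

Lemma real_part (q m n D : nat) : leq 1 q -> leq 1 D ->
  (exp 1 * INR D * (INR m / INR q) ^ n <= 1)%R ->
  leq (expn m n).+1 (expn q n) /\
  (forall d, D = d.+1 -> leq 1 d ->
     leq (muln (expn m n) (expn d.+1 d.+1)) (muln (expn q n) (expn d d))).
Proof.
move=> q0 D1 H.
have qR : (0 < INR q)%R by apply: lt_0_INR; apply/ltP.
set a := INR (expn m n); set b := INR (expn q n).
have Hp : ((INR m / INR q) ^ n = a / b)%R.
  by rewrite /a /b !INR_expn /Rdiv Rpow_mult_distr pow_inv.
have b0 : (0 < b)%R by rewrite /b INR_expn; apply: pow_lt.
have a0 : (0 <= a)%R by apply: pos_INR.
have e2 : (2 < exp 1)%R by have := exp_ineq1 1 R1_neq_R0; lra.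
have DR : (1 <= INR D)%R by apply: (le_INR 1); apply/leP.
have key : (exp 1 * INR D * a <= b)%R.
  rewrite Hp in H.
  have := Rmult_le_compat_r b _ _ (Rlt_le _ _ b0) H.
  replace (exp 1 * INR D * (a / b) * b)%R with (exp 1 * INR D * a)%R by (field; lra).
  lra.
split.
  apply/ltP; apply: INR_lt; rewrite -/a -/b.
  have eD : (2 <= exp 1 * INR D)%R by nra.
  have h2a : (2 * a <= exp 1 * INR D * a)%R by apply: Rmult_le_compat_r.
  have : (2 * a <= b)%R by lra.
  lra.
move=> d Dd d0.
apply/leP; apply: INR_le; rewrite -!multE !mult_INR -/a -/b !INR_expn.
have hd : (0 < INR d)%R by apply: lt_0_INR; apply/ltP.
have h1 : (1 + / INR d <= exp (/ INR d))%R.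
  have := exp_ineq1 (/ INR d) (Rinv_neq_0_compat _ (Rgt_not_eq _ _ hd)); lra.
have h2 : ((1 + / INR d) ^ d <= exp 1)%R.
  have -> : exp 1 = (exp (/ INR d) ^ d)%R.
    by rewrite exp_pow_INR; f_equal; field; lra.
  apply: pow_incr; split => //.
  have : (0 < / INR d)%R by apply: Rinv_0_lt_compat.
  lra.
have h3 : (INR d.+1 ^ d <= exp 1 * INR d ^ d)%R.
  have -> : INR d.+1 = (INR d * (1 + / INR d))%R by rewrite S_INR; field; lra.
  rewrite Rpow_mult_distr.
  have := pow_le (INR d) d (Rlt_le _ _ hd).
  nra.
have hDd : INR D = INR d.+1 by rewrite Dd.
rewrite hDd in key.
have p0 : (0 <= INR d ^ d)%R by apply: pow_le; lra.
have p1 : (0 <= a * INR d.+1)%R by apply: Rmult_le_pos => //; apply: pos_INR.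
have hpow : (INR d.+1 ^ d.+1 = INR d.+1 * INR d.+1 ^ d)%R by [].
rewrite hpow.
apply: Rle_trans (_ : (a * INR d.+1 * (exp 1 * INR d ^ d) <= _)%R).
  rewrite -Rmult_assoc; apply: Rmult_le_compat_l => //.
have -> : (a * INR d.+1 * (exp 1 * INR d ^ d) = (exp 1 * INR d.+1 * a) * INR d ^ d)%R by ring.
by apply: Rmult_le_compat_r.
Qed.

Theorem theorem2p4 (F : finFieldType) (n t m l : nat) :
  (0 < n)%N -> (0 < t)%N -> (0 < m)%N -> (m <= t)%N -> (0 < l)%N ->
  (exp 1 * (INR 'C(l, t) - INR 'C(l - t, t)) * (INR m / INR #|F|) ^ n <= 1)%R ->
  EGZ_gt (Fqn F n) t m l.
Proof.
move=> n0 t0 m0 mt l0 H.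
have q0 : leq 1 #|F| by apply/card_gt0P; exists (@GRing.zero F).
have hle : ('C(l - t, t) <= 'C(l, t))%coq_nat by apply/leP; apply: leq_bin2l; apply: leq_subr.
rewrite -minus_INR in H; last exact: hle.
apply: main_nat => // [Dge | d Dd d0].
  by case: (real_part q0 Dge H).
have Dge : leq 1 ('C(l, t) - 'C(l - t, t)) by rewrite Dd.
case: (real_part q0 Dge H) => _ HB; exact: HB Dd d0.
Qed.
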